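(* Let $d\geq 2$ and $k\geq 1$. For every simplicial complex $\mathsf{X}^d_k$ constructed as below (with any choices), $\mathsf{X}^d_k$ has $k(d+2)$ vertices, $\tau(\mathcal{F}(\mathsf{X}^d_k))=2k$, and no transversal of $\mathcal{F}(\mathsf{X}^d_k)$ of size $2k$ contains all vertices of a facet of $\mathsf{X}^d_k$ that contains the apex vertex of $\mathsf{X}^d_k$.
   Context: Connected sum: for PL $d$-spheres $\mathsf{K}_1,\mathsf{K}_2$, facets $f_i$ of $\mathsf{K}_i$ and a bijection $\psi:f_1\to f_2$, $\mathsf{K}_1\#_\psi\mathsf{K}_2=\big((\mathsf{K}_1\setminus\{f_1\})\sqcup(\mathsf{K}_2\setminus\{f_2\})\big)/\sim_\psi$, identifying every proper subface $g_1$ of $f_1$ with $\psi(g_1)$. Let $\mathsf{S}^d$ be the boundary complex of the abstract $(d+1)$-simplex on $d+2$ vertices, and $\mathsf{C}^d=\mathsf{S}^0*\cdots*\mathsf{S}^0$ ($(d+1)$-fold join) the boundary complex of the $(d+1)$-dimensional cross polytope, with its antipodal involution on vertices; the antipodal facet of a facet $f$ of $\mathsf{C}^d$ is the set of antipodes of its vertices. Let $\mathsf{C}^d_+=\mathsf{C}^d\#_{\psi_S}\mathsf{S}^d$ for a facet $f$ of $\mathsf{C}^d$, a facet $g$ of $\mathsf{S}^d$ and a bijection $\psi_S:f\to g$; its apex vertex is the vertex of $\mathsf{S}^d$ not in $g$, and its base facet is the facet of $\mathsf{C}^d$ antipodal to $f$. Define $\mathsf{X}^d_1=\mathsf{S}^d$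 with an arbitrary vertex chosen as apex vertex. For $k\geq 2$, $\mathsf{X}^d_k=\mathsf{X}^d_{k-1}\#_{\psi_k}\mathsf{C}^d_+$ where $\psi_k$ is any bijection from a facet $f_{k-1}$ of $\mathsf{X}^d_{k-1}$ containing the apex vertex of $\mathsf{X}^d_{k-1}$ to the base facet of $\mathsf{C}^d_+$; the apex vertex of $\mathsf{X}^d_k$ is the apex vertex of this copy of $\mathsf{C}^d_+$. $\mathcal{F}(\cdot)$ is the facet hypergraph and $\tau$ the minimum size of a vertex set meeting all facets (a transversal). *)

(* Defs.v *)
From mathcomp Require Import all_boot all_order.
From mathcomp Require Import finmap.
Set Implicit Arguments. Unset Strict Implicit. Unset Printing Implicit Defensive.
Local Open Scope fset_scope.

(* A pure simplicial complex is represented by its facet hypergraph: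
   a finite set of facets, each a finite set of vertices (labelled by nat). *)
Definition cplx := {fset {fset nat}}.

Definition Vtx (F : cplx) : {fset nat} := \bigcup_(f <- F) f.

(* Concrete realization of the connected sum K1 #_psi K2.
   h relabels the vertices of K2: on f2 it is the inverse of the bijection
   psi : f1 -> f2 (so h maps f2 bijectively onto f1), and every other vertex
   of K2 is sent injectively to a fresh label not used by K1. *)
Definition ConnSum (K1 : cplx) (f1 : {fset nat}) (K2 : cplx) (f2 : {fset nat})
    (h : nat -> nat) (K : cplx) : Prop :=
  [/\ f1 \in K1 /\ f2 \in K2,
      ({in Vtx K2 &, injective h}),
      h @` f2 = f1,
      (forall v, v \in Vtx K2 -> v \notin f2 -> h v \notin Vtx K1) &
      K = (K1 `\ f1) `|` [fset h @` g | g : {fset nat} in K2 `\ f2]].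

(* boundary of the (d+1)-simplex on vertices 0..d+1 *)
Definition simplexV (d : nat) : {fset nat} := [fset i | i in iota 0 d.+2].
Definition Simplex (d : nat) : cplx := [fset simplexV d `\ i | i in simplexV d].

(* boundary of the (d+1)-dimensional cross polytope: vertices 0..2d+1,
   antipodal pairs {2i, 2i+1} for i <= d; a facet picks one vertex per pair *)
Definition Cross (d : nat) : cplx :=
  [fset [fset (2 * val i + (s : {ffun 'I_d.+1 -> bool}) i)%N | i : 'I_d.+1]
    | s : {ffun 'I_d.+1 -> bool}].

Definition antip (v : nat) : nat := if odd v then v.-1 else v.+1.

(* CPlus d K ap base : K is a realization of C^d_+ = C^d #_{psi_S} S^d
   (any facet f of C^d, any facet g = simplexV d \ {i} of S^d, any bijection),
   ap is its apex vertex (image of the vertex i of S^d not in g) and base is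
   its base facet (the facet of C^d antipodal to f). *)
Definition CPlus (d : nat) (K : cplx) (ap : nat) (base : {fset nat}) : Prop :=
  exists (f : {fset nat}) (i : nat) (h : nat -> nat),
    [/\ i \in simplexV d,
        ConnSum (Cross d) f (Simplex d) (simplexV d `\ i) h K,
        ap = h i &
        base = antip @` f].

(* IsX d k K a : K is a realization of X^d_k (with some choices) and a is its
   apex vertex. *)
Inductive IsX (d : nat) : nat -> cplx -> nat -> Prop :=
  | IsX1 a : a \in simplexV d -> IsX d 1 (Simplex d) a
  | IsXS k K a f Kc ap base h K' :
      IsX d k K a ->
      f \in K -> a \in f ->
      CPlus d Kc ap base ->
      ConnSum K f Kc base h K' ->
      IsX d k.+1 K' (h ap).

Definition ftransversal (F : cplx) (T : {fset nat}) : bool :=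
  all (fun f => f `&` T != fset0) F.

Definition tau (F : cplx) : nat :=
  \big[minn/#|` Vtx F|]_(T <- fpowerset (Vtx F) | ftransversal F T) #|` T|.

(* Main.v *)
Require Import Defs.
From mathcomp Require Import all_boot all_order.
From mathcomp Require Import finmap zify.
Local Open Scope fset_scope.
Local Open Scope nat_scope.

Lemma VtxP (F : cplx) v : reflect (exists2 g, g \in F & v \in g) (v \in Vtx F).
Proof.
apply: (iffP (bigfcupP _ _ _ _)) => [[g /andP[gF _] vg]|[g gF vg]];
  by exists g => //; rewrite gF.
Qed.

Lemma Vtx_sub (F : cplx) g v : g \in F -> v \in g -> v \in Vtx F.
Proof. by move=> gF vg; apply/VtxP; exists g. Qed.

Definition hit (g S : {fset nat}) := exists2 x, x \in g & x \in S.

Lemma transvP (F : cplx) T :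
  reflect (forall g, g \in F -> hit g T) (ftransversal F T).
Proof.
apply: (iffP allP) => H g gF.
  by case/fset0Pn: (H g gF) => x; rewrite in_fsetI => /andP[]; exists x.
by case: (H g gF) => x xg xT; apply/fset0Pn; exists x; rewrite in_fsetI xg.
Qed.

Lemma card_le1 {A : {fset nat}} {x y} : #|` A| <= 1 -> x \in A -> y \in A -> x = y.
Proof.
move=> c xA yA; apply/eqP; apply: contraT => nxy.
have : y \in A `\ x by rewrite in_fsetD1 eq_sym nxy.
by rewrite (cardfs0_eq (_ : #|` A `\ x| = 0)) ?in_fset0 //;
   move: c; rewrite (cardfsD1 x) xA; case: #|` _|.
Qed.

Lemma bigmin_le (s : seq {fset nat}) (P : pred {fset nat}) x T :
  T \in s -> P T -> \big[minn/x]_(U <- s | P U) #|` U| <= #|` T|.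
Proof.
elim: s => //= U s IH; rewrite in_cons big_cons => /orP[/eqP<-|Ts] PT.
  by rewrite PT geq_minl.
case: (P U); last exact: IH.
by rewrite geq_min IH ?orbT.
Qed.

Lemma tau_eq (F : cplx) m :
  m <= #|` Vtx F| ->
  (exists2 T, T `<=` Vtx F & ftransversal F T /\ #|` T| = m) ->
  (forall T, T `<=` Vtx F -> ftransversal F T -> m <= #|` T|) ->
  tau F = m.
Proof.
move=> mV [T0 T0V [T0t T0c]] lb; apply/eqP; rewrite eqn_leq; apply/andP; split.
  by rewrite -T0c /tau bigmin_le // fpowersetE.
rewrite /tau big_seq_cond; apply: (big_ind (fun x => m <= x)) => //.
  by move=> x y ? ?; rewrite leq_min; apply/andP; split.
by move=> U /andP[]; rewrite fpowersetE; apply: lb.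
Qed.

Definition Good d k (K : cplx) a : Prop :=
 [/\ #|` Vtx K| = k * (d + 2),
     exists2 T, T `<=` Vtx K & ftransversal K T /\ #|` T| = 2 * k,
     forall T, T `<=` Vtx K -> ftransversal K T -> 2 * k <= #|` T| &
     forall T, T `<=` Vtx K -> ftransversal K T ->
       forall F, F \in K -> a \in F -> F `<=` T -> 2 * k < #|` T| ].

Lemma SVP d v : (v \in simplexV d) = (v < d.+2).
Proof. by rewrite /simplexV in_fset mem_iota. Qed.

Lemma card_SV d : #|` simplexV d| = d.+2.
Proof. by rewrite /simplexV card_fseq undup_id ?iota_uniq ?size_iota. Qed.

Lemma card_SVD d i : i \in simplexV d -> #|` simplexV d `\ i| = d.+1.
Proof. by move=> iS; move: (card_SV d); rewrite (cardfsD1 i) iS => -[]. Qed.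

Lemma SimplexP d g :
  reflect (exists2 i, i \in simplexV d & g = simplexV d `\ i) (g \in Simplex d).
Proof. exact: imfsetP. Qed.

Lemma VtxS d v : (v \in Vtx (Simplex d)) = (v \in simplexV d).
Proof.
apply/VtxP/idP => [[g /SimplexP[i iS ->]]|vS]; first by rewrite in_fsetD1 => /andP[].
exists (simplexV d `\ (if v == 0 then 1 else 0)).
  by apply/SimplexP; eexists; last reflexivity; rewrite SVP; case: (v == 0).
by rewrite in_fsetD1 vS andbT; case: (v =P 0) => [->|/eqP v0] //.
Qed.

Lemma good_base d a : 2 <= d -> a \in simplexV d -> Good d 1 (Simplex d) a.
Proof.
move=> d2 aS; split.
- by rewrite mul1n addn2 -card_SV; congr #|` _|; apply/fsetP => v; exact: VtxS.
- exists [fset 0; 1].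
    apply/fsubsetP => v; rewrite VtxS SVP !inE; by case/orP => /eqP ->.
  split; last first.
    rewrite cardfsU !cardfs1.
    have -> : [fset 0] `&` [fset 1] = fset0 :> {fset nat}.
      by apply/fsetP => x; rewrite !inE; case: (x =P 0) => // ->.
    by rewrite cardfs0.
  apply: (introT (transvP _ _)) => g /SimplexP[i iS ->].
  case: (i =P 0) => [->|/eqP i0].
    by exists 1; rewrite !inE ?SVP.
  by exists 0; rewrite !inE ?SVP // eq_sym i0.
- move=> T TV /transvP tT; rewrite muln1 leqNgt; apply/negP => c.
  have S0 : simplexV d `\ 0 \in Simplex d by apply/SimplexP; exists 0; rewrite ?SVP.
  case: (tT _ S0) => x _ xT.
  have xS : x \in simplexV d by rewrite -VtxS; apply: (fsubsetP TV).
  have Sx : simplexV d `\ x \in Simplex d by apply/SimplexP; exists x.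
  case: (tT _ Sx) => y; rewrite in_fsetD1 => /andP[/eqP yx _] yT.
  by apply: yx; apply: (card_le1 _ yT xT); rewrite -ltnS.
- move=> T _ _ F /SimplexP[i iS ->] _ FT.
  by rewrite muln1; apply: leq_trans (fsubset_leq_card FT); rewrite card_SVD.
Qed.

Set Implicit Arguments.
Record Piece (d : nat) (Kc : cplx) (ap : nat) (base N : {fset nat}) : Prop := {
  pc_base : base \in Kc;
  pc_disj : forall v, v \in N -> v \notin base;
  pc_vtx : forall v, (v \in Vtx (Kc `\ base)) = (v \in base) || (v \in N);
  pc_card : #|` N| = d.+2;
  pc_ap : ap \in N;
  pc_K3 : forall S, (forall g, g \in Kc -> g != base -> hit g S) ->
            #|` S `&` N| <= 1 -> base `<=` S;
  pc_K4 : forall S, (forall g, g \in Kc -> g != base -> hit g S) ->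
            (forall b, b \in base -> b \notin S) ->
            forall v, v \in N -> v != ap -> v \in S;
  pc_K5 : forall g, g \in Kc -> ap \in g -> g `<=` N /\ 3 <= #|` g|;
  pc_K6 : forall b, b \in base -> exists x y, [/\ x \in N, y \in N, x != y &
            forall g, g \in Kc -> g != base -> [|| b \in g, x \in g | y \in g]];
  pc_K7 : exists2 g, g \in Kc & (g != base) && (g `<=` N) }.
Unset Implicit Arguments.

Section Step.
Variables (d k : nat) (K : cplx) (a : nat) (f : {fset nat}) (Kc : cplx)
  (ap : nat) (base N : {fset nat}) (h : nat -> nat) (K' : cplx).
Hypotheses (d2 : 2 <= d) (k1 : 1 <= k) (G : Good d k K a) (fK : f \in K) (af : a \in f)
  (P : Piece d Kc ap base N) (CS : ConnSum K f Kc base h K').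

Let V := Vtx K.

Lemma inVc v : (v \in base) || (v \in N) -> v \in Vtx Kc.
Proof.
rewrite -(pc_vtx P) => /VtxP[g]; rewrite in_fsetD1 => /andP[_ gK] vg.
exact: Vtx_sub gK vg.
Qed.

Lemma VcE v : v \in Vtx Kc -> (v \in base) || (v \in N).
Proof.
case/VtxP => g gK vg; case: (g =P base) => [<-|/eqP gb]; first by rewrite vg.
by rewrite -(pc_vtx P); apply: (Vtx_sub _ (g)) => //; rewrite in_fsetD1 gb.
Qed.

Lemma injc : {in Vtx Kc &, injective h}.
Proof. by case: CS. Qed.

Lemma hb : h @` base = f.
Proof. by case: CS. Qed.

Lemma freshN n : n \in N -> h n \notin V.
Proof.
move=> nN; case: CS => _ _ _ fr _; apply: fr; first by apply: inVc; rewrite nN orbT.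
exact: (pc_disj P).
Qed.

Lemma fV v : v \in f -> v \in V.
Proof. exact: Vtx_sub. Qed.

Lemma K'P g : g \in K' <->
  (g \in K /\ g != f) \/ exists2 g0, (g0 \in Kc /\ g0 != base) & g = h @` g0.
Proof.
case: CS => _ _ _ _ ->; rewrite in_fsetU in_fsetD1; split.
  case/orP => [/andP[gf gK]|/imfsetP[g0 /= g0K ->]]; first by left.
  by right; exists g0 => //; move: g0K; rewrite in_fsetD1 => /andP[].
case => [[gK gf]|[g0 [g0K g0b] ->]]; first by rewrite gf gK.
by apply/orP; right; apply/imfsetP; exists g0 => //=; rewrite in_fsetD1 g0b.
Qed.

Lemma VtxK'P v : v \in Vtx K' <-> v \in V \/ exists2 n, n \in N & v = h n.
Proof.
split.
  case/VtxP => g /K'P[[gK _] vg|[g0 [g0K g0b] ->] /imfsetP[x /= xg0 ->]].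
    by left; exact: Vtx_sub gK vg.
  have : x \in Vtx (Kc `\ base) by apply: (Vtx_sub _ (g0)) => //; rewrite in_fsetD1 g0b.
  rewrite (pc_vtx P) => /orP[xb|xN]; last by right; exists x.
  by left; apply: fV; rewrite -hb; apply/imfsetP; exists x.
have viaVc x : (x \in base) || (x \in N) -> h x \in Vtx K'.
  rewrite -(pc_vtx P) => /VtxP[g0]; rewrite in_fsetD1 => /andP[g0b g0K] xg0.
  apply: (Vtx_sub _ (h @` g0)); first by apply/K'P; right; exists g0.
  by apply/imfsetP; exists x.
case => [/VtxP[g gK vg]|[n nN ->]]; last by apply: viaVc; rewrite nN orbT.
case: (g =P f) => [gf|/eqP gf]; last by apply: (Vtx_sub _ (g)) => //; apply/K'P; left.
move: vg; rewrite gf -hb => /imfsetP[x /= xb ->]; by apply: viaVc; rewrite xb.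
Qed.


Lemma hbf b : b \in base -> h b \in f.
Proof. by move=> bb; rewrite -hb; apply/imfsetP; exists b. Qed.

Lemma lower T : T `<=` Vtx K' -> ftransversal K' T ->
  2 * k.+1 <= #|` T| /\ (forall F, F \in K' -> h ap \in F -> F `<=` T -> 2 * k.+1 < #|` T|).
Proof.
move=> TV /transvP tT.
case: G => _ _ lb apb.
set To := T `&` V; set Tn := T `\` V.
have cT : #|` T| = #|` To| + #|` Tn| by rewrite /To /Tn cardfsID.
have ToV : To `<=` V by apply/fsubsetP => x; rewrite in_fsetI => /andP[].
have Tohit : forall g, g \in K -> g != f -> hit g To.
  move=> g gK gf; case: (tT g _) => [|x xg xT]; first by apply/K'P; left.
  by exists x => //; rewrite in_fsetI xT; exact: Vtx_sub gK xg.
set S := [fset v in Vtx Kc | h v \in T].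
have inS v : (v \in S) = (v \in Vtx Kc) && (h v \in T) by rewrite !inE.
have Shit : forall g, g \in Kc -> g != base -> hit g S.
  move=> g gK gb; case: (tT (h @` g)) => [|y /imfsetP[x /= xg ->] hxT].
    by apply/K'P; right; exists g.
  by exists x => //; rewrite inS hxT andbT; exact: Vtx_sub gK xg.
have cS : #|` S `&` N| = #|` Tn|.
  have -> : Tn = h @` (S `&` N).
    apply/fsetP => y; apply/idP/idP.
      rewrite in_fsetD => /andP[yV yT].
      case/VtxK'P: (fsubsetP TV y yT) => [yV'|[n nN ey]]; first by rewrite yV' in yV.
      apply/imfsetP; exists n => //; rewrite in_fsetI nN andbT inS -ey yT andbT.
      by apply: inVc; rewrite nN orbT.
    case/imfsetP => x /=; rewrite in_fsetI inS => /andP[/andP[_ hxT] xN] ->.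
    by rewrite in_fsetD hxT andbT; exact: freshN _ xN.
  symmetry; apply/eqP/card_in_imfsetP => x y; rewrite !in_fsetI !inS.
  by move=> /andP[/andP[xV _] _] /andP[/andP[yV _] _]; apply: injc.
have Tn1 : 1 <= #|` Tn|.
  case: (pc_K7 P) => g gK /andP[gb gN]; case: (Shit g gK gb) => x xg xS.
  by rewrite -cS (cardfsD1 x) in_fsetI xS (fsubsetP gN x xg).
have apF : forall F, F \in K' -> h ap \in F -> F `<=` T ->
    3 <= #|` S `&` N| /\ ap \in S.
  move=> F /K'P[[FK _] apF _|[g0 [g0K g0b] ->] /imfsetP[x /= xg0 ex] FT].
    by move: (freshN _ (pc_ap P)); rewrite (Vtx_sub _ _ _ FK apF).
  have apVc : ap \in Vtx Kc by apply: inVc; rewrite (pc_ap P) orbT.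
  have xVc : x \in Vtx Kc by exact: Vtx_sub g0K xg0.
  have apg0 : ap \in g0 by rewrite (injc _ _ apVc xVc ex).
  case: (pc_K5 P _ g0K apg0) => g0N c3.
  have g0S : g0 `<=` S `&` N.
    apply/fsubsetP => y yg0; rewrite in_fsetI (fsubsetP g0N y yg0) andbT inS.
    rewrite (Vtx_sub _ _ _ g0K yg0) /=; apply: (fsubsetP FT).
    by apply/imfsetP; exists y.
  split; first by apply: leq_trans c3 (fsubset_leq_card g0S).
  by move: (fsubsetP g0S ap apg0); rewrite in_fsetI => /andP[].
case: (fset_0Vmem (f `&` To)) => [E|[x]].
  have nSb : forall b, b \in base -> b \notin S.
    move=> b bb; apply/negP; rewrite inS => /andP[_ hbT].
    have : h b \in f `&` To by rewrite !in_fsetI hbf // hbT fV // hbf.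
    by rewrite E in_fset0.
  have K4 := pc_K4 P Shit nSb.
  have Na : N `\ ap `<=` S `&` N.
    apply/fsubsetP => v; rewrite in_fsetD1 => /andP[va vN].
    by rewrite in_fsetI vN andbT K4.
  have cNa : #|` N `\ ap| = d.+1.
    by move: (pc_card P); rewrite (cardfsD1 ap) (pc_ap P) => -[].
  have c3 : d.+1 <= #|` Tn| by rewrite -cS -cNa fsubset_leq_card.
  have To1 : 2 * k <= #|` To| + 1.
    have := lb (a |` To); rewrite cardfsU1 => H.
    apply: leq_trans (H _ _) _.
    - apply/fsubsetP => v; rewrite in_fset1U => /orP[/eqP->|vTo].
        exact: fV.
      exact: (fsubsetP ToV).
    - apply/transvP => g gK; case: (g =P f) => [->|/eqP gf].
        by exists a => //; rewrite in_fset1U eqxx.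
      by case: (Tohit g gK gf) => y yg yT; exists y => //; rewrite in_fset1U yT orbT.
    - by case: (a \in To); lia.
  split; first by lia.
  move=> F FK' apF' FT; case: (apF F FK' apF' FT) => _ apS.
  have NS : N `<=` S `&` N.
    apply/fsubsetP => v vN; case: (v =P ap) => [->|/eqP va].
      by rewrite in_fsetI apS (pc_ap P).
    by rewrite in_fsetI vN andbT K4.
  have : d.+2 <= #|` Tn| by rewrite -cS -(pc_card P) fsubset_leq_card.
  by lia.
rewrite in_fsetI => /andP[xf xTo].
have Tot : ftransversal K To.
  apply/transvP => g gK; case: (g =P f) => [->|/eqP gf]; first by exists x.
  exact: Tohit.
have lbo := lb To ToV Tot.
split; last first.
  move=> F FK' apF' FT; case: (apF F FK' apF' FT) => c3 _.
  by move: c3; rewrite cS; lia.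
case: (leqP 2 #|` Tn|) => [Tn2|Tn1']; first by lia.
have bS : base `<=` S by apply: (pc_K3 P) Shit _; rewrite cS -ltnS.
have fTo : f `<=` To.
  apply/fsubsetP => v; rewrite -hb => /imfsetP[b /= bb ->].
  move: (fsubsetP bS b bb); rewrite inS => /andP[_ hbT].
  by rewrite in_fsetI hbT fV // hbf.
have := apb To ToV Tot f fK af fTo; lia.
Qed.


Lemma vcount : #|` Vtx K'| = k.+1 * (d + 2).
Proof.
case: G => cK _ _ _.
have -> : Vtx K' = V `|` h @` N.
  apply/fsetP => v; rewrite in_fsetU; apply/idP/idP.
    case/VtxK'P => [->//|[n nN ->]]; apply/orP; right; by apply/imfsetP; exists n.
  by case/orP => [vV|/imfsetP[n /= nN ->]]; apply/VtxK'P; [left | right; exists n].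
have cN : #|` h @` N| = d.+2.
  rewrite -(pc_card P); apply/eqP/card_in_imfsetP => x y xN yN.
  by apply: injc; apply: inVc; rewrite ?xN ?yN orbT.
rewrite cardfsU.
have -> : V `&` h @` N = fset0.
  apply/fsetP => v; rewrite in_fsetI in_fset0; apply/negP => /andP[vV /imfsetP[n /= nN ev]].
  by move: (freshN _ nN); rewrite -ev vV.
rewrite cardfs0 subn0 cN /V cK mulSn; lia.
Qed.

Lemma upper : exists2 T, T `<=` Vtx K' & ftransversal K' T /\ #|` T| = 2 * k.+1.
Proof.
case: G => _ [T0 T0V [/transvP T0t T0c]] _ _.
case: (T0t f fK) => u; rewrite -hb => /imfsetP[b /= bb ->] hbT0.
case: (pc_K6 P _ bb) => x [y [xN yN xy H]].
have xVc : x \in Vtx Kc by apply: inVc; rewrite xN orbT.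
have yVc : y \in Vtx Kc by apply: inVc; rewrite yN orbT.
exists (h x |` (h y |` T0)).
  apply/fsubsetP => v; rewrite !in_fset1U => /orP[/eqP->|/orP[/eqP->|vT0]].
  - by apply/VtxK'P; right; exists x.
  - by apply/VtxK'P; right; exists y.
  - by apply/VtxK'P; left; exact: (fsubsetP T0V).
split.
  apply/transvP => g /K'P[[gK gf]|[g0 [g0K g0b] ->]].
    by case: (T0t g gK) => v vg vT; exists v => //; rewrite !in_fset1U vT !orbT.
  case/or3P: (H g0 g0K g0b) => [bg|xg|yg].
  - by exists (h b); [apply/imfsetP; exists b | rewrite !in_fset1U hbT0 !orbT].
  - by exists (h x); [apply/imfsetP; exists x | rewrite !in_fset1U eqxx].
  - by exists (h y); [apply/imfsetP; exists y | rewrite !in_fset1U eqxx orbT].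
have nx : h x \notin T0 by apply/negP => /(fsubsetP T0V); apply/negP/freshN.
have ny : h y \notin T0 by apply/negP => /(fsubsetP T0V); apply/negP/freshN.
have nxy : h x != h y by apply/negP => /eqP /(injc _ _ xVc yVc) /eqP; apply/negP.
rewrite cardfsU1 cardfsU1 in_fset1U negb_or nxy nx ny T0c /=; lia.
Qed.

Lemma step_good : Good d k.+1 K' (h ap).
Proof.
split; [exact: vcount | exact: upper | | ].
  by move=> T TV Tt; case: (lower T TV Tt).
by move=> T TV Tt; case: (lower T TV Tt).
Qed.

End Step.

Lemma antipE m (b : bool) : antip (2 * m + b) = 2 * m + ~~ b.
Proof.
by rewrite /antip oddD oddM /=; case: b => /=; rewrite ?addn0 ?addn1.
Qed.

Lemma decomp v : v = 2 * v./2 + odd v.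
Proof. by rewrite mulnC muln2 addnC odd_double_half. Qed.

Lemma antipK v : antip (antip v) = v.
Proof. by move: (decomp v); move: (v./2) (odd v) => m b ->; rewrite !antipE negbK. Qed.

Lemma antip_neq v : antip v != v.
Proof.
by move: (decomp v); move: (v./2) (odd v) => m b ->; rewrite antipE; case: b => /=; lia.
Qed.

Lemma antip_lt d v : v < 2 * d.+1 -> antip v < 2 * d.+1.
Proof.
by move: (decomp v); move: (v./2) (odd v) => m b ->; rewrite antipE; case: b => /=; lia.
Qed.

Lemma bit_inj m m' (b b' : bool) : 2 * m + b = 2 * m' + b' -> m = m' /\ b = b'.
Proof. by case: b; case: b' => /= H; split => //; lia. Qed.

Definition cfacet d (s : {ffun 'I_d.+1 -> bool}) : {fset nat} :=
  [fset (2 * val i + s i)%N | i : 'I_d.+1].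
Arguments cfacet {d}.

Lemma CrossE d g : (g \in Cross d) = [exists s : {ffun 'I_d.+1 -> bool}, g == cfacet s].
Proof.
apply/imfsetP/existsP => [[s _ ->]|[s /eqP ->]]; first by exists s.
by exists s.
Qed.

Lemma cfacetP d (s : {ffun 'I_d.+1 -> bool}) m (b : bool) (lt : m < d.+1) :
  (2 * m + b \in cfacet s) = (s (Ordinal lt) == b).
Proof.
apply/imfsetP/eqP => [[i _ /bit_inj[ei eb]]|<-]; last by exists (Ordinal lt).
by rewrite eb; congr (s _); apply: val_inj.
Qed.

Lemma cfacet_lt d (s : {ffun 'I_d.+1 -> bool}) v : v \in cfacet s -> v < 2 * d.+1.
Proof. by case/imfsetP => i _ ->; move: (ltn_ord i); case: (s i) => /=; lia. Qed.

Definition cross_ok d (g : {fset nat}) :=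
  (forall v, v \in g -> v < 2 * d.+1) /\
  (forall v, v < 2 * d.+1 -> (v \in g) = ~~ (antip v \in g)).

Lemma CrossP d g : (g \in Cross d) <-> cross_ok d g.
Proof.
rewrite CrossE; split.
  case/existsP => s /eqP ->; split; first exact: cfacet_lt.
  move=> v; move: (decomp v); move: (v./2) (odd v) => m b -> vlt.
  have lt : m < d.+1 by move: vlt; case: b => /=; lia.
  by rewrite antipE !(cfacetP _ _ _ _ lt); case: (s _); clear vlt; case: b.
case=> glt gx; apply/existsP; exists [ffun i : 'I_d.+1 => (2 * val i + 1) \in g].
apply/eqP/fsetP => v; apply/idP/idP.
  move: (decomp v); move: (v./2) (odd v) => m b -> vg; have vlt := glt _ vg.
  have lt : m < d.+1 by clear vg; move: vlt; case: b => /=; lia.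
  rewrite (cfacetP _ _ _ _ lt) ffunE /=; move: vg vlt; case: b => vg vlt /=.
    by apply/eqP; exact: vg.
  move: (gx _ vlt); rewrite antipE /= => H.
  by move: vg; rewrite [_ \in g]H; case: (_ \in g).
case/imfsetP => i _ ->; rewrite ffunE.
case e: (2 * val i + 1 \in g) => //=.
have lt : 2 * val i + 0 < 2 * d.+1.
  by move: (ltn_ord i); rewrite -[val i]/(nat_of_ord i); lia.
by rewrite (gx _ lt) (antipE _ false); apply/negbT.
Qed.
Arguments card_SVD {d i}.
Arguments antip_lt {d v}.
Set Implicit Arguments. Unset Strict Implicit.

Lemma antip_eq u v : (antip u == antip v) = (u == v).
Proof. by apply/eqP/eqP => [e|->//]; rewrite -(antipK u) e antipK. Qed.

Lemma antip_eqL u v : (antip u == v) = (u == antip v).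
Proof. by rewrite -antip_eq antipK. Qed.

Lemma in_antip (F : {fset nat}) v : (v \in antip @` F) = (antip v \in F).
Proof.
apply/imfsetP/idP => [[w wF ->]|H]; first by rewrite antipK.
by exists (antip v); rewrite ?antipK.
Qed.

Lemma cross_antip d F : cross_ok d F -> cross_ok d (antip @` F).
Proof.
case=> Flt Fx; split => [v|v vlt]; rewrite !in_antip.
  by move/Flt/antip_lt; rewrite antipK.
by rewrite (Fx _ (antip_lt vlt)) antipK.
Qed.

Lemma cross_swap d F w : cross_ok d F -> w \in F ->
  cross_ok d (antip w |` (F `\ w)).
Proof.
case=> Flt Fx wF; split => [v|v vlt].
  by rewrite in_fset1U in_fsetD1 => /orP[/eqP->|/andP[_ /Flt//]]; apply: antip_lt; apply: Flt.
rewrite !in_fset1U !in_fsetD1 antip_eq antip_eqL.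
case: (v =P w) => [->|/eqP vw] /=.
  by rewrite eq_sym (negbTE (antip_neq w)).
case: (v =P antip w) => [->|/eqP vaw] /=.
  by [].
by rewrite (Fx _ vlt).
Qed.

Section CP.
Variables (d : nat) (Kc : cplx) (ap : nat) (base : {fset nat}) (f : {fset nat})
  (i : nat) (hh : nat -> nat).
Hypotheses (d2 : 2 <= d) (iS : i \in simplexV d)
  (CS : ConnSum (Cross d) f (Simplex d) (simplexV d `\ i) hh Kc)
  (eap : ap = hh i) (ebase : base = antip @` f).

Local Notation SV := (simplexV d).

Lemma fC : cross_ok d f.
Proof. by case: CS => [[fC _] _ _ _ _]; apply/CrossP. Qed.

Lemma injS : {in SV &, injective hh}.
Proof. by case: CS => _ inj _ _ _ x y xS yS; apply: inj; rewrite VtxS. Qed.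

Lemma hSV : hh @` (SV `\ i) = f.
Proof. by case: CS. Qed.

Lemma apnC g : g \in Cross d -> ap \notin g.
Proof.
move=> gC; case: CS => _ _ _ fr _.
have : hh i \notin Vtx (Cross d) by apply: fr; rewrite ?VtxS // in_fsetD1 eqxx.
by rewrite -eap; apply: contra => apg; exact: Vtx_sub gC apg.
Qed.

Lemma SVD_eq j : j \in SV -> (SV `\ j == SV `\ i) = (j == i).
Proof.
move=> jS; apply/eqP/eqP => [e|->//]; apply/eqP; apply: contraT => ji.
by move: (in_fsetD1 SV i j); rewrite -e ji jS in_fsetD1 eqxx.
Qed.

Lemma KcP g : g \in Kc <-> (g \in Cross d /\ g != f) \/
   (exists2 j, (j \in SV) && (j != i) & g = hh @` (SV `\ j)).
Proof.
case: CS => _ _ _ _ ->; rewrite in_fsetU in_fsetD1; split.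
  case/orP => [/andP[gf gK]|/imfsetP[g0 /= g0K ->]]; first by left.
  right; move: g0K; rewrite in_fsetD1 => /andP[g0n /SimplexP[j jS ej]].
  by exists j; rewrite ?jS -?ej //= -(SVD_eq jS) -ej.
case => [[gK gf]|[j /andP[jS ji] ->]]; first by rewrite gf gK.
apply/orP; right; apply/imfsetP; exists (SV `\ j) => //=.
by rewrite in_fsetD1 (SVD_eq jS) ji; apply/SimplexP; exists j.
Qed.

Lemma cardf : #|` f| = d.+1.
Proof.
rewrite -hSV -(card_SVD iS); apply/eqP/card_in_imfsetP => x y.
by rewrite !in_fsetD1 => /andP[_ xS] /andP[_ yS]; apply: injS.
Qed.

Lemma inbase b : (b \in base) = (antip b \in f).
Proof. by rewrite ebase in_antip. Qed.

Lemma baseC : cross_ok d base.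
Proof. by rewrite ebase; apply: cross_antip; exact: fC. Qed.

Lemma f_nbase v : v \in f -> v \notin base.
Proof.
move=> vf; case: fC => flt fx.
by move: (fx _ (flt _ vf)); rewrite vf => H; rewrite inbase -H.
Qed.

Lemma base_nf b : b \in base -> b \notin f.
Proof.
rewrite inbase => bf; case: fC => flt fx.
by move: (fx _ (flt _ bf)); rewrite antipK bf => H; rewrite -H.
Qed.

Lemma other v : exists2 w, w \in f & w != v.
Proof.
case: (fset_0Vmem (f `\ v)) => [E|[w]]; last by rewrite in_fsetD1 => /andP[wv wf]; exists w.
by move: (cardfsD1 v f); rewrite E cardfs0 cardf; case: (v \in f) => /=; lia.
Qed.

Definition stk j := hh @` (SV `\ j).

Lemma stk_in j : j \in SV -> j != i -> stk j \in Kc.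
Proof. by move=> jS ji; apply/KcP; right; exists j; rewrite ?jS. Qed.

Lemma stk_ap j : j \in SV -> j != i -> ap \in stk j.
Proof. by move=> jS ji; rewrite eap; apply/imfsetP; exists i; rewrite // in_fsetD1 eq_sym ji. Qed.

Lemma stk_N j : j \in SV -> stk j `<=` ap |` f.
Proof.
move=> jS; apply/fsubsetP => y /imfsetP[x /= xS ->]; rewrite in_fset1U.
case: (x =P i) => [->|/eqP xi]; first by rewrite eap eqxx.
apply/orP; right; rewrite -hSV; apply/imfsetP; exists x => //.
by move: xS; rewrite !in_fsetD1 xi => /andP[].
Qed.

Lemma stk_card j : j \in SV -> #|` stk j| = d.+1.
Proof.
move=> jS; rewrite -(card_SVD jS); apply/eqP/card_in_imfsetP => x y.
by rewrite !in_fsetD1 => /andP[_ xS] /andP[_ yS]; apply: injS.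
Qed.

Lemma stk_notin j : j \in SV -> hh j \notin stk j.
Proof.
move=> jS; apply/negP => /imfsetP[x /= xS e].
move: xS; rewrite in_fsetD1 => /andP[xj xS].
by move: xj; rewrite (injS jS xS e) eqxx.
Qed.

Lemma j0P : exists2 j, j \in SV & j != i.
Proof.
exists (if i == 0 then 1 else 0); first by rewrite SVP; case: (i == 0); lia.
by case: (i =P 0) => [->|/eqP]//; rewrite eq_sym.
Qed.

Lemma Gb_in b : b \in base -> b |` (f `\ antip b) \in Kc /\ b |` (f `\ antip b) != base.
Proof.
move=> bb; have abf : antip b \in f by rewrite -inbase.
split.
  apply/KcP; left; split.
    by apply/CrossP; move: (cross_swap fC abf); rewrite antipK.
  by apply/negP => /eqP e; move: (base_nf bb); rewrite -e in_fset1U eqxx.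
case: (other (antip b)) => w wf wab; apply/negP => /eqP e.
by move: (f_nbase wf); rewrite -e in_fset1U in_fsetD1 wab wf orbT.
Qed.

Lemma Gv_in v : v \in f -> v |` (base `\ antip v) \in Kc /\ v |` (base `\ antip v) != base.
Proof.
move=> vf; have avb : antip v \in base by rewrite inbase antipK.
split; last first.
  by apply/negP => /eqP e; move: (f_nbase vf); rewrite -e in_fset1U eqxx.
apply/KcP; left; split.
  by apply/CrossP; move: (cross_swap baseC avb); rewrite antipK.
case: (other v) => w wf wv; apply/negP => /eqP e.
have awb : antip w \in base by rewrite inbase antipK.
by move: (base_nf awb); rewrite -e in_fset1U in_fsetD1 antip_eq wv awb /= orbT.
Qed.


Lemma fCr : f \in Cross d.
Proof. by apply/CrossP; exact: fC. Qed.

Lemma bCr : base \in Cross d.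
Proof. by apply/CrossP; exact: baseC. Qed.

Lemma apb : ap \notin base.
Proof. exact: apnC bCr. Qed.

Lemma apf : ap \notin f.
Proof. exact: apnC fCr. Qed.

Lemma stk_ne j : j \in SV -> j != i -> stk j != base.
Proof. by move=> jS ji; apply/negP => /eqP e; move: apb; rewrite -e stk_ap. Qed.

Lemma piece : Piece d Kc ap base (ap |` f).
Proof.
have bnf : base != f.
  case: (other 0) => w wf _; apply/negP => /eqP e.
  have awb : antip w \in base by rewrite inbase antipK.
  by move: (base_nf awb); rewrite -e awb.
split.
- by apply/KcP; left; split => //; exact: bCr.
- by move=> v; rewrite in_fset1U => /orP[/eqP->|vf]; [exact: apb | exact: f_nbase].
- move=> v; apply/idP/idP.
    case/VtxP => g; rewrite in_fsetD1 => /andP[gb /KcP[[gC gf]|[j /andP[jS ji] ->]]] vg.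
      case/CrossP: gC => glt _; have vlt := glt v vg; case: fC => _ fx.
      rewrite in_fset1U; case vf: (v \in f); first by rewrite !orbT.
      by move: (fx _ vlt); rewrite vf inbase => /esym/negbFE->.
    by rewrite (fsubsetP (stk_N jS) _ vg) orbT.
  case/orP => [vb|].
    case: (Gb_in vb) => GK Gb; apply/VtxP; exists (v |` (f `\ antip v)).
      by rewrite in_fsetD1 Gb GK.
    by rewrite in_fset1U eqxx.
  rewrite in_fset1U => /orP[/eqP->|vf].
    case: j0P => j jS ji; apply/VtxP; exists (stk j); last exact: stk_ap.
    by rewrite in_fsetD1 stk_in // stk_ne.
  case: (Gv_in vf) => GK Gb; apply/VtxP; exists (v |` (base `\ antip v)).
    by rewrite in_fsetD1 Gb GK.
  by rewrite in_fset1U eqxx.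
- by rewrite cardfsU1 apf cardf.
- by rewrite in_fset1U eqxx.
- move=> S Shit c1.
  have nSf : forall z, z \in S -> z \in f -> False.
    move=> z zS; rewrite -hSV => /imfsetP[j /= jSi ez].
    move: jSi; rewrite in_fsetD1 => /andP[ji jS].
    case: (Shit _ (stk_in jS ji) (stk_ne jS ji)) => z' z'g z'S.
    have z'N : z' \in S `&` (ap |` f) by rewrite in_fsetI z'S (fsubsetP (stk_N jS)).
    have zN : z \in S `&` (ap |` f).
      by rewrite in_fsetI zS in_fset1U ez -hSV (in_imfset _ (fun x => hh x)) ?orbT // in_fsetD1 ji.
    have e := card_le1 c1 z'N zN.
    by move: (stk_notin jS); rewrite -ez -e z'g.
  apply/fsubsetP => b bb; case: (Gb_in bb) => GK Gb; case: (Shit _ GK Gb) => z.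
  rewrite in_fset1U in_fsetD1 => /orP[/eqP-> //|/andP[_ zf]] zS.
  by case: (nSf z zS zf).
- move=> S Shit nSb v; rewrite in_fset1U => /orP[/eqP->|vf]; first by rewrite eqxx.
  move=> _; case: (Gv_in vf) => GK Gb; case: (Shit _ GK Gb) => z.
  rewrite in_fset1U in_fsetD1 => /orP[/eqP-> //|/andP[_ zb]] zS.
  by move: (nSb z zb); rewrite zS.
- move=> g /KcP[[gC _] apg|[j /andP[jS ji] ->] _]; first by move: (apnC gC); rewrite apg.
  by split; [exact: stk_N | rewrite stk_card //; lia].
- move=> b bb; exists ap, (antip b); split.
  + by rewrite in_fset1U eqxx.
  + by rewrite in_fset1U -inbase bb orbT.
  + by apply/negP => /eqP e; move: apf; rewrite e -inbase bb.
  move=> g /KcP[[gC _]|[j /andP[jS ji] ->]] gb.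
    case/CrossP: gC => _ gx; case: baseC => blt _.
    by rewrite (gx _ (blt _ bb)); case: (antip b \in g); rewrite ?orbT.
  by rewrite stk_ap ?orbT.
- case: j0P => j jS ji; exists (stk j); first exact: stk_in.
  by rewrite stk_N // stk_ne.
Qed.

End CP.

Lemma isx_good d k K a : 2 <= d -> IsX d k K a -> 1 <= k /\ Good d k K a.
Proof.
move=> d2; elim => [a0 aS|k0 K0 a0 f Kc ap base h K' _ [k1 IH] fK af
   [f' [i [hh [iS CS eap ebase]]]] CS'].
  by split => //; exact: good_base.
split => //.
exact: (@step_good _ _ _ _ _ _ _ _ _ _ _ d2 k1 IH fK af (piece d2 iS CS eap ebase) CS').
Qed.

Local Open Scope fset_scope.

Theorem mainTheorem14 (d k : nat) (K : cplx) (a : nat) :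
  2 <= d -> 1 <= k -> IsX d k K a ->
  [/\ #|` Vtx K| = (k * (d + 2))%N,
      tau K = (2 * k)%N &
      forall T : {fset nat}, T `<=` Vtx K -> ftransversal K T -> #|` T| = (2 * k)%N ->
        forall f, f \in K -> a \in f -> ~~ (f `<=` T)].
Proof.
move=> d2 k1 X; case: (isx_good d2 X) => _ [cV up lb apb]; split => //.
  have [T TV [_ cT]] := up.
  by apply: tau_eq up lb; rewrite -cT fsubset_leq_card.
move=> T TV Tt cT F FK aF; apply/negP => FT.
by move: (apb T TV Tt F FK aF FT); rewrite cT ltnn.
Qed.
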